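(* Let $\mathcal R_1=\{(0^m1^m,2^m):m\ge0\}\subseteq\{0,1\}^*\times\{2\}^*$. For every $\varepsilon>0$, $\mathcal R_1$ can be computed by a probabilistic finite state transducer with probability $1-\varepsilon$. $\mathcal R_1$ cannot be computed by a deterministic finite state transducer.
   Context: A probabilistic finite state transducer (pfst) is a tuple $T=(Q,\Sigma_1,\Sigma_2,V,f,q_0,Q_{\rm acc},Q_{\rm rej})$ with finite state set $Q$, finite input/output alphabets $\Sigma_1,\Sigma_2$, initial state $q_0$, disjoint accepting/rejecting sets $Q_{\rm acc},Q_{\rm rej}\subseteq Q$ (the other states are non-halting). For each $a\in\Sigma_1\cup\{\ddagger,\$\}$ ($\ddagger,\$$ are end markers) there is a stochastic $Q\times Q$ matrix $V_a$ and an output function $f_a:Q\to\Sigma_2^*$; $V_\$$ puts all probability on halting states. On input $v$ the machine reads $\ddagger v\$$; in state $q$ reading $a$ it appends $f_a(q)$ to the output tape and moves to state $p$ with probability $(V_a)_{qp}$; if $p$ is accepting (rejecting) it halts and accepts with the current output (rejects). $T(w|v)$ is the probability of accepting with output $w$ on input $v$. A deterministic finite state transducer (dfst) is a pfst all of whose matrix entries are $0$ or $1$. For $\alpha>1/2$, $T$ computes $\mathcal R\subseteq\Sigma_1^*\times\Sigma_2^*$ with probability $\alpha$ if for all $v,w$: $(v,w)\in\mathcal R\Rightarrow T(w|v)\ge\alpha$ and $(v,w)\notin\mathcal R\Rightarrow T(w|v)\le1-\alpha$. (A dfst computes $\mathcal R$ if it does so with some probability $\alpha>1/2$, equivalently $T(w|v)=1$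 iff $(v,w)\in\mathcal R$.) *)

(* Defs.v *)
From HB Require Import structures.
From mathcomp Require Import all_boot all_order all_algebra.
From mathcomp Require Import reals.
Set Implicit Arguments. Unset Strict Implicit. Unset Printing Implicit Defensive.
Import Order.TTheory GRing.Theory Num.Theory.
Local Open Scope ring_scope.

(* Tape symbols: input letters together with the end markers ‡ (LEnd) and $ (REnd). *)
Inductive sym (S : Type) := Sym of S | LEnd | REnd.
Arguments LEnd {S}. Arguments REnd {S}.

Record pfst (R : realType) (S1 S2 : finType) := Pfst {
  st : finType;
  q0 : st;
  Qacc : {set st};
  Qrej : {set st};
  V : sym S1 -> st -> st -> R;
  f : sym S1 -> st -> seq S2;
  pfst_disj : [disjoint Qacc & Qrej];
  pfst_ge0 : forall a q p, 0 <= V a q p;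
  pfst_stoch : forall a q, \sum_(p : st) V a q p = 1;
  pfst_end : forall q, \sum_(p in Qacc :|: Qrej) V REnd q p = 1 }.

Arguments q0 {R S1 S2} _.
Arguments Qacc {R S1 S2} _.
Arguments Qrej {R S1 S2} _.
Arguments V {R S1 S2} _ _ _ _.
Arguments f {R S1 S2} _ _ _.

Section Semantics.
Variables (R : realType) (S1 S2 : finType) (T : pfst R S1 S2).

Fixpoint run (s : seq (sym S1)) (q : st T) (out : seq S2) (w : seq S2) : R :=
  match s with
  | [::] => 0
  | a :: s' =>
      \sum_(p : st T) V T a q p *
        (if p \in Qacc T then ((out ++ f T a q) == w)%:R
         else if p \in Qrej T then 0
         else run s' p (out ++ f T a q) w)
  end.

Definition prob (w : seq S2) (v : seq S1) : R :=
  if q0 T \in Qacc T then (w == [::])%:R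
  else if q0 T \in Qrej T then 0
  else run (LEnd :: map (@Sym S1) v ++ [:: REnd]) (q0 T) [::] w.

Definition computes_with_prob (Rel : seq S1 -> seq S2 -> Prop) (alpha : R) : Prop :=
  forall v w, (Rel v w -> alpha <= prob w v) /\ (~ Rel v w -> prob w v <= 1 - alpha).

Definition is_dfst : Prop := forall a q p, V T a q p = 0 \/ V T a q p = 1.

Definition dfst_computes (Rel : seq S1 -> seq S2 -> Prop) : Prop :=
  is_dfst /\ exists alpha : R, 1 / 2 < alpha /\ computes_with_prob Rel alpha.

End Semantics.

(* R_1 = {(0^m 1^m, 2^m)}: input alphabet {0,1} = bool (false = 0, true = 1),
   output alphabet {2} = unit. *)
Definition R1 (v : seq bool) (w : seq unit) : Prop :=
  exists m : nat, v = nseq m false ++ nseq m true /\ w = nseq m tt.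

(* Main.v *)
Require Import Defs.
From HB Require Import structures.
From mathcomp Require Import all_boot all_order all_algebra.
From mathcomp Require Import reals.
From mathcomp Require Import lra zify.
Import Order.TTheory GRing.Theory Num.Theory.
Local Open Scope ring_scope.
Set Implicit Arguments. Unset Strict Implicit. Unset Printing Implicit Defensive.

Lemma sum_ind (R : realType) (T : finType) (x : T) (B : T -> R) :
  \sum_p (p == x)%:R * B p = B x.
Proof.
rewrite (bigD1 x) //= eqxx mul1r big1 ?addr0 // => p /negbTE ->.
by rewrite mul0r.
Qed.

Lemma run_det (R : realType) (S1 S2 : finType) (T : pfst R S1 S2) a s (q : st T) out w (nx : st T) :
  (forall p, V T a q p = (p == nx)%:R) ->
  run (a :: s) q out w =
  (if nx \in Qacc T then (out ++ f T a q == w)%:R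
   else if nx \in Qrej T then 0 else run s nx (out ++ f T a q) w).
Proof.
move=> HV /=. under eq_bigr do rewrite HV.
exact: (sum_ind nx (fun p => if p \in Qacc T then (out ++ f T a q == w)%:R
   else if p \in Qrej T then 0 else run s p (out ++ f T a q) w)).
Qed.

Lemma eq_unit_seq (x y : seq unit) : (x == y) = (size x == size y).
Proof.
elim: x y => [|[] x IH] [|[] y] //=.
by rewrite eqseq_cons /= IH eqSS.
Qed.

Lemma run_size (R : realType) (S1 : finType) (T : pfst R S1 unit) s (q : st T) o w o' w' :
  (size o + size w' = size o' + size w)%N -> run s q o w = run s q o' w'.
Proof.
elim: s q o o' => [|a s IH] q o o' H //=.
apply: eq_bigr => p _.
case: ifP => _.
  congr (_ * _%:R). rewrite !eq_unit_seq !size_cat.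
  congr nat_of_bool; apply/idP/idP => /eqP E; apply/eqP; move: E H; move: (size o) (size o') (size w) (size w') (size (f T a q)); clear; lia.
case: ifP => _ //. congr (_ * _); apply: IH; rewrite !size_cat; move: H; move: (size o) (size o') (size w) (size w') (size (f T a q)); clear; lia.
Qed.

Definition nextd (R : realType) (T : pfst R bool unit) a q : st T :=
  if [pick p | V T a q p == 1] is Some p then p else q.
Arguments nextd {R} T a q.

Lemma nextdP (R : realType) (T : pfst R bool unit) : is_dfst T ->
  forall a q p, V T a q p = (p == nextd T a q)%:R.
Proof.
move=> Hd a q p. rewrite /nextd. case: pickP => [x /eqP Hx | Hn].
  case: (eqVneq p x) => [-> | Hpx]; first by rewrite Hx.
  case: (Hd a q p) => // Hp1. exfalso.
  have := @pfst_stoch _ _ _ T a q.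
  have : V T a q x + V T a q p <= \sum_p V T a q p.
    rewrite (bigD1 x) //= (bigD1 p) //=.
    rewrite lerD2l lerDl; apply: sumr_ge0 => *; apply: pfst_ge0.
  rewrite Hx Hp1 => H1 H2. rewrite H2 in H1. lra.
have H0 : forall p, V T a q p = 0.
  move=> p'; case: (Hd a q p') => // H; move: (Hn p'); by rewrite H eqxx.
have := @pfst_stoch _ _ _ T a q. rewrite big1 // => H. exfalso; move: H; lra.
Qed.

Inductive cfg (Q : Type) := CRun of Q & seq unit | CAcc of seq unit | CRej.
Arguments CRej {Q}.

Definition dstep (R : realType) (T : pfst R bool unit) a (c : cfg (st T)) :=
  match c with
  | CRun q o => let p := nextd T a q in let o' := o ++ f T a q in
      if p \in Qacc T then CAcc _ o' else if p \in Qrej T then CRej else CRun p o'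
  | _ => c end.
Arguments dstep {R} T a c.

Fixpoint walk (R : realType) (T : pfst R bool unit) s c :=
  match s with [::] => c | a :: s' => walk T s' (dstep T a c) end.
Arguments walk {R} T s c.

Definition cval (R : realType) (T : pfst R bool unit) (c : cfg (st T)) s w : R :=
  match c with CRun q o => run s q o w | CAcc o => (o == w)%:R | CRej => 0 end.
Arguments cval {R} T c s w.

Lemma walk_cat (R : realType) (T : pfst R bool unit) s s' c :
  walk T (s ++ s') c = walk T s' (walk T s c).
Proof. by elim: s c => //= a s IH c. Qed.

Lemma cval_cat (R : realType) (T : pfst R bool unit) (Hd : is_dfst T) s s' c w :
  cval T c (s ++ s') w = cval T (walk T s c) s' w.
Proof.
elim: s c => [|a s IH] c //=. rewrite -IH.
case: c => [q o|o|] //=.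
move: (run_det (s ++ s') o w (nextdP Hd a q)) => /= ->.
by case: ifP => _ //; case: ifP.
Qed.

Lemma walk_acc (R : realType) (T : pfst R bool unit) s o : walk T s (CAcc _ o) = CAcc _ o.
Proof. by elim: s. Qed.
Lemma walk_rej (R : realType) (T : pfst R bool unit) s : walk T s CRej = CRej.
Proof. by elim: s. Qed.

Lemma walk_size (R : realType) (T : pfst R bool unit) s q o q' o' :
  walk T s (CRun q o) = CRun q' o' -> (size o <= size o')%N.
Proof.
elim: s q o => [|a s IH] q o /=; first by case=> _ <-.
case: ifP => _; first by rewrite walk_acc.
case: ifP => _; first by rewrite walk_rej.
move/IH => H; apply: leq_trans H; by rewrite size_cat leq_addr.
Qed.

Definition key (Q : Type) (c : cfg Q) : option (option Q) :=
  match c with CRun q _ => Some (Some q) | CAcc _ => Some None | CRej => None end.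

Lemma no_dfst (R : realType) : ~ exists T : pfst R bool unit, dfst_computes T R1.
Proof.
case=> T [Hd [al [Hal Hc]]].
pose c0 := if q0 T \in Qacc T then CAcc _ [::] else if q0 T \in Qrej T then CRej
  else CRun (q0 T) [::].
have Hprob : forall v w, prob T w v = cval T c0 (LEnd :: map (@Sym _) v ++ [:: REnd]) w.
  move=> v w; rewrite /prob /c0; case: ifP => _ /=; first by rewrite eq_sym.
  by case: ifP.
pose ci i := walk T (LEnd :: nseq i (Sym false)) c0.
have core : forall i j, (i < j)%N -> key (ci i) = key (ci j) -> False.
  move=> i j Hij Heq.
  have Hcj : ci j = walk T (nseq (j - i) (Sym false)) (ci i).
    by rewrite /ci -walk_cat cat_cons -nseqD subnKC // ltnW.
  pose s := map (@Sym _) (nseq i true) ++ [:: REnd].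
  have Hpr : forall k w, prob T w (nseq k false ++ nseq i true) = cval T (ci k) s w.
    move=> k w; rewrite Hprob /ci -cval_cat //.
    by rewrite map_cat -catA map_nseq.
  have [w' Hw'] : exists w', cval T (ci j) s w' = cval T (ci i) s (nseq i tt).
    move: Heq Hcj. case: (ci i) => [q o | o | ]; case: (ci j) => [q' o' | o' | ] //=.
    - case=> -> Hw. have := walk_size (esym Hw) => Hs.
      exists (nseq (size o' + i - size o) tt). apply: run_size.
      rewrite !size_nseq. move: Hs; move: (size o) (size o'); clear; lia.
    - by move=> _; rewrite walk_acc => [[->]]; exists (nseq i tt).
    - by move=> _ _; exists [::].
  have H1 := (Hc (nseq i false ++ nseq i true) (nseq i tt)).1.
  have H2 := (Hc (nseq j false ++ nseq i true) w').2.
  rewrite !Hpr in H1 H2.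
  have : al <= cval T (ci i) s (nseq i tt) by apply: H1; exists i.
  have : cval T (ci j) s w' <= 1 - al.
    apply: H2 => -[m [Hv _]].
    have := congr1 (count id) Hv; have := congr1 (count negb) Hv.
    rewrite !count_cat !count_nseq /=. lia.
  rewrite Hw'. lra.
have : ~~ injectiveb (fun i : 'I_(#|{: option (option (st T))}|).+1 => key (ci i)).
  apply/negP => /injectiveP Hinj; move: (leq_card _ Hinj).
  by rewrite card_ord ltnn.
case/injectivePn => i [j Hij Heq].
case: (ltngtP i j) => H.
- exact: core H Heq.
- exact: core H (esym Heq).
- by move: Hij; rewrite -val_eqE /= H eqxx.
Qed.

Notation Tst n := (option bool + ('I_n.+1 * bool * 'I_n.+1))%type.

Definition sstart n : Tst n := inl None.
Definition acc n : Tst n := inl (Some true).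
Definition rej n : Tst n := inl (Some false).
Definition ux n (j : 'I_n.+1) (x : bool) : nat := if x then (n.+1 - j)%N else j.

Definition nxt n (a : sym bool) (q : Tst n) : Tst n :=
  match q with
  | inr (j, ph, c) =>
      match a with
      | Sym x => if ~~ x && ph then rej n else inr (j, x, inZp (c + ux j x))
      | REnd => if (c == 0 :> nat) then acc n else rej n
      | LEnd => rej n
      end
  | inl _ => rej n
  end.

Definition isSL n (a : sym bool) (q : Tst n) : bool :=
  match q, a with inl None, LEnd => true | _, _ => false end.

Definition distr (R : realType) n (p : Tst n) : R :=
  \sum_(j < n.+1) (p == inr (j, false, ord0))%:R / n.+1%:R.

Definition Vt (R : realType) n a (q p : Tst n) : R :=
  if isSL a q then distr R p else (p == nxt a q)%:R.

Definition ft n (a : sym bool) (q : Tst n) : seq unit :=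
  match q, a with
  | inr (j, _, c), Sym x => nseq ((c + ux j x) %/ n.+1) tt
  | _, _ => [::] end.

Lemma sum_ind1 (R : realType) (T : finType) (x : T) : \sum_p (p == x)%:R = (1 : R).
Proof.
rewrite (bigD1 x) //= eqxx big1 ?addr0 // => p /negbTE ->. by [].
Qed.

Lemma Vt_ge0 (R : realType) n a (q p : Tst n) : 0 <= Vt R a q p.
Proof.
rewrite /Vt; case: ifP => _; last exact: ler0n.
apply: sumr_ge0 => j _; apply: divr_ge0; exact: ler0n.
Qed.

Lemma distr_sum (R : realType) n : \sum_(p : Tst n) distr R p = 1.
Proof.
rewrite /distr exchange_big /=.
under eq_bigr do rewrite -mulr_suml sum_ind1 mul1r.
rewrite sumr_const card_ord -[_ *+ n.+1]mulr_natl mulfV //.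
by rewrite pnatr_eq0.
Qed.

Lemma Vt_stoch (R : realType) n a (q : Tst n) : \sum_p Vt R a q p = 1.
Proof.
rewrite /Vt; case: (isSL a q); first exact: distr_sum.
exact: sum_ind1.
Qed.

Lemma Vt_end (R : realType) n (q : Tst n) :
  \sum_(p in [set acc n] :|: [set rej n]) Vt R REnd q p = 1.
Proof.
rewrite /Vt; have -> : isSL REnd q = false by case: q => [[[]|]|].
have Hin : nxt REnd q \in [set acc n] :|: [set rej n].
  case: q => [?|[[j ph] c]] /=; rewrite !inE ?eqxx ?orbT //.
  by case: ifP; rewrite !eqxx ?orbT.
rewrite (bigD1 (nxt REnd q)) //= eqxx big1 ?addr0 // => p /andP [_ /negbTE ->].
by [].
Qed.

Lemma disj n : [disjoint [set acc n] & [set rej n]].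
Proof. by rewrite disjoints1 inE. Qed.

Definition Tn (R : realType) n : pfst R bool unit :=
  @Pfst R bool unit (Tst n) (sstart n) [set acc n] [set rej n] (@Vt R n) (@ft n)
    (disj n) (@Vt_ge0 R n) (@Vt_stoch R n) (@Vt_end R n).

Fixpoint okp (ph : bool) (v : seq bool) : bool :=
  match v with
  | [::] => true
  | x :: v' => if x then okp true v' else ~~ ph && okp false v'
  end.

Definition U n (j : 'I_n.+1) (v : seq bool) : nat :=
  (j * count negb v + (n.+1 - j) * count id v)%N.

Lemma runT (R : realType) n a s (q : Tst n) out w : isSL a q = false ->
  @run R bool unit (Tn R n) (a :: s) q out w =
  (if nxt a q \in [set acc n] then (out ++ ft a q == w)%:R
   else if nxt a q \in [set rej n] then 0
   else @run R bool unit (Tn R n) s (nxt a q) (out ++ ft a q) w).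
Proof. move=> H. apply: (run_det (T := Tn R n)) => p /=. by rewrite /Vt H. Qed.

Lemma inZpE n k : nat_of_ord (inZp k : 'I_n.+1) = (k %% n.+1)%N.
Proof. by []. Qed.

Lemma arith_div N k u : (0 < N)%N -> (k %/ N + (k %% N + u) %/ N)%N = ((k + u) %/ N)%N.
Proof. move=> HN. by rewrite [in RHS](divn_eq k N) -addnA divnMDl. Qed.

Lemma branch (R : realType) n (j : 'I_n.+1) v ph (c : 'I_n.+1) out w :
  @run R bool unit (Tn R n) (map (@Sym _) v ++ [:: REnd]) (inr (j, ph, c)) out w =
  (okp ph v && ((c + U j v) %% n.+1 == 0)%N
     && (out ++ nseq ((c + U j v) %/ n.+1) tt == w))%:R.
Proof.
elim: v ph c out => [|x v IH] ph c out.
  rewrite runT //=.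
  have Hc := ltn_ord c.
  rewrite /U /= !muln0 !addn0 modn_small // divn_small // cats0.
  by case: eqP => _; rewrite !inE //=; case: eqP.
rewrite runT //=.
case Hxp: (~~ x && ph).
  rewrite !inE /=. by case: x ph Hxp => [] [].
rewrite !inE /= IH inZpE modnDml.
have -> : (if x then okp true v else ~~ ph && okp false v) = okp x v by case: x ph Hxp => [] [].
have -> : (c + U j (x :: v) = (c + ux j x) + U j v)%N.
  rewrite /U /ux; case: x {Hxp} => /=; rewrite ?mulnDr ?muln1 ?muln0; lia.
by rewrite -catA -nseqD arith_div.
Qed.

Definition bj n (v : seq bool) (w : seq unit) (j : 'I_n.+1) : bool :=
  okp false v && (U j v %% n.+1 == 0)%N && (nseq (U j v %/ n.+1) tt == w).

Lemma probT (R : realType) n v w : prob (Tn R n) w v =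
  n.+1%:R^-1 * \sum_(j < n.+1) (bj v w j)%:R.
Proof.
rewrite /prob /= !inE /=.
rewrite /Vt /=.
rewrite /distr. under eq_bigr do rewrite mulr_suml.
rewrite exchange_big /= mulr_sumr. apply: eq_bigr => j _.
under eq_bigr do rewrite mulrAC.
rewrite -mulr_suml sum_ind !inE /= branch mulrC /bj.
by rewrite add0n.
Qed.

Lemma okp_true ph b : okp ph (nseq b true).
Proof. by elim: b ph => //= b IH ph. Qed.

Lemma okp_nseq a b : okp false (nseq a false ++ nseq b true).
Proof. elim: a => //= *. exact: okp_true. Qed.

Lemma okp_shape ph v : okp ph v ->
  v = nseq (count negb v) false ++ nseq (count id v) true /\ (ph -> count negb v = 0%N).
Proof.
elim: v ph => [|x v IH] ph //=.
case: x => /=.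
  move/IH => [Hv H0]. rewrite add0n (H0 isT) in Hv *. split => //=.
  by rewrite {1}Hv.
case/andP => /negbTE -> /IH [Hv _]; split => //. by rewrite add0n {1}Hv.
Qed.

Lemma U_eq n (j : 'I_n.+1) m : U j (nseq m false ++ nseq m true) = (n.+1 * m)%N.
Proof.
rewrite /U !count_cat !count_nseq /= !mul1n !mul0n addn0 add0n -mulnDl subnKC //.
exact: ltnW (ltn_ord j).
Qed.

Lemma bj_uniq n v w (j1 j2 : 'I_n.+1) : ~ R1 v w -> bj v w j1 -> bj v w j2 -> j1 = j2.
Proof.
move=> HnR /andP[/andP[Hok /eqP H1] /eqP W1] /andP[/andP[_ /eqP H2] /eqP W2].
case: (eqVneq j1 j2) => // Hne; exfalso; apply: HnR.
have [Hv _] := okp_shape Hok.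
set a := count negb v in Hv *. set b := count id v in Hv *.
have HU : U j1 v = U j2 v.
  rewrite (divn_eq (U j1 v) n.+1) (divn_eq (U j2 v) n.+1) H1 H2.
  have := congr1 size (etrans W1 (esym W2)); rewrite !size_nseq => ->. by [].
have Hab : a = b.
  move: HU Hne; rewrite /U -/a -/b.
  have := ltn_ord j1; have := ltn_ord j2.
  rewrite -val_eqE /=.
  move: (nat_of_ord j1) (nat_of_ord j2) => x y Hy Hx HU /eqP Hxy. nia.
exists a; split; first by rewrite Hv -Hab.
rewrite -W1 Hv -Hab U_eq mulKn //.
Qed.

Lemma sum1 (R : realType) N : \sum_(j < N) (1 : R) = N%:R.
Proof. by rewrite sumr_const card_ord. Qed.

Lemma part1 (R : realType) (eps : R) : 0 < eps ->
  exists T : pfst R bool unit, computes_with_prob T R1 (1 - eps).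
Proof.
move=> Heps.
pose n := Num.bound (eps^-1).
have Hn : eps^-1 < n%:R by apply: archi_boundP; rewrite invr_ge0 ltW.
have HN : n.+1%:R^-1 <= eps.
  have Hn1 : eps^-1 < n.+1%:R by apply: (lt_le_trans Hn); rewrite ler_nat.
  rewrite -(invrK eps) lef_pV2 ?posrE ?invr_gt0 //; first exact: ltW.
exists (Tn R n) => v w; rewrite probT; split.
  case=> m [-> ->].
  rewrite (eq_bigr (fun _ => 1)); last first.
    by move=> j _; rewrite /bj okp_nseq U_eq modnMr mulKn // !eqxx.
  rewrite sum1 mulVf ?pnatr_eq0 //.
  lra.
move=> HnR.
have HS : \sum_(j < n.+1) (bj v w j)%:R <= (1 : R).
  case: (pickP (@bj n v w)) => [j0 Hj0 | Hno].
    rewrite (bigD1 j0) //= Hj0 big1 ?addr0 // => j Hj.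
    have -> : bj v w j = false.
      apply/negP => Hb; move: Hj; by rewrite (bj_uniq HnR Hb Hj0) eqxx.
    by [].
  by rewrite big1 // => j _; rewrite Hno.
have Hpos : 0 <= n.+1%:R^-1 :> R by rewrite invr_ge0 ler0n.
have Hm := ler_wpM2l Hpos HS.
rewrite mulr1 in Hm. apply: (le_trans Hm). have -> : 1 - (1 - eps) = eps by lra. exact: HN.
Qed.

Unset Implicit Arguments.

Theorem theorem4 (R : realType) :
  (forall eps : R, 0 < eps ->
     exists T : pfst R bool unit, computes_with_prob T R1 (1 - eps)) /\
  ~ (exists T : pfst R bool unit, dfst_computes T R1).
Proof.
split; [exact: part1 | exact: no_dfst].
Qed.
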